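(* With $V$, $\Delta^+$ and $f$ as in the context (type $E_7$), the map $f:\Delta^+\cup\{0\}\to V$ is a bijection.
   Context: Let $F=\{0,1,2,3\}$ be the group $\mathbb{Z}/2\times\mathbb{Z}/2$, with operation $a\oplus b$ given by binary addition without carry; it is a 2-dimensional $\mathbb{Z}/2$-vector space with symplectic form $(a|a')=0$ if $a=0$, $a'=0$ or $a=a'$, and $(a|a')=1$ otherwise. Let $V=F^3$, writing $(a,b,c)$ as $abc$, with coordinatewise $\oplus$ and form $(abc|a'b'c')=(a|a')+(b|b')+(c|c')\in\mathbb{Z}/2$. Let $\Delta$ be the root system of type $E_7$ with simple roots $\alpha_1,\dots,\alpha_7$, where $\langle\alpha_i,\alpha_i\rangle=2$, $\langle\alpha_i,\alpha_j\rangle=-1$ if $\{i,j\}\in\{\{1,3\},\{3,4\},\{4,5\},\{5,6\},\{6,7\},\{2,4\}\}$, and $0$ otherwise. Let $\Lambda=\bigoplus_i\mathbb{Z}\alpha_i$ and $\Delta^+$ the positive roots. Let $f:\Lambda\to V$ be the group homomorphism with $f(\alpha_1)=100$, $f(\alpha_2)=030$, $f(\alpha_3)=300$, $f(\alpha_4)=111$, $f(\alpha_5)=003$, $f(\alpha_6)=001$, $f(\alpha_7)=033$. *)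

(* Defs.v *)
From mathcomp Require Import all_boot all_order all_algebra.
Set Implicit Arguments. Unset Strict Implicit. Unset Printing Implicit Defensive.
Import Order.TTheory GRing.Theory Num.Theory.
Local Open Scope ring_scope.

(* F = {0,1,2,3} = Z/2 x Z/2 with binary addition without carry (xor). *)
Definition F := 'I_4.
Definition mkF (n : nat) : F := Ordinal (ltn_pmod n (isT : (0 < 4)%N)).
(* for a, b < 4, lxor a b < 4, so the reduction mod 4 is the identity *)
Definition Fadd (a b : F) : F := mkF (Nat.lxor (nat_of_ord a) (nat_of_ord b)).
Definition F0 : F := ord0.

Definition V := (F * F * F)%type.
Definition Vadd (v w : V) : V :=
  let: (a, b, c) := v in let: (a', b', c') := w in (Fadd a a', Fadd b b', Fadd c c').
Definition V0 : V := (F0, F0, F0).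
Definition mkV (a b c : nat) : V := (mkF a, mkF b, mkF c).

(* The root lattice Lambda = (+)_i Z alpha_i, in coordinates w.r.t. the simple
   roots alpha_1..alpha_7: a 7-tuple of integers, the coordinate of index j
   (0-based, j < 7) being the coefficient of alpha_(j+1).  (Tuples, sums as
   folds over iota 0 7, and nat indices are used so that everything computes.) *)
Definition Lam := 7.-tuple int.

Lemma size_mk7 (g : nat -> int) : size [seq g j | j <- iota 0 7] == 7%N.
Proof. by rewrite size_map size_iota. Qed.

Definition mk7 (g : nat -> int) : Lam := Tuple (size_mk7 g).

Definition coord (x : Lam) (j : nat) : int := nth 0 (val x) j.

Definition sum7 (g : nat -> int) : int := foldr (fun j acc => g j + acc) 0 (iota 0 7).

(* E_7 edges (1-based): {1,3},{3,4},{4,5},{5,6},{6,7},{2,4}. *)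
Definition e7_edge (i j : nat) : bool :=
  [|| (i == 1) && (j == 3), (i == 3) && (j == 4), (i == 4) && (j == 5),
      (i == 5) && (j == 6), (i == 6) && (j == 7) | (i == 2) && (j == 4)]%N.

(* Gram matrix <alpha_(i+1), alpha_(j+1)> (0-based indices i, j < 7). *)
Definition gram (i j : nat) : int :=
  if i == j then 2
  else if e7_edge i.+1 j.+1 || e7_edge j.+1 i.+1 then -1 else 0.

Definition form (x y : Lam) : int := sum7 (fun i => sum7 (fun j => coord x i * coord y j * gram i j)).

Definition alpha (i : nat) : Lam := mk7 (fun j => if j == i then 1 else 0).

Definition refl (i : nat) (x : Lam) : Lam :=
  mk7 (fun j => coord x j - form x (alpha i) * coord (alpha i) j).

(* The root system Delta = W . {alpha_1..alpha_7}: the smallest set containing the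
   simple roots and closed under the simple reflections (which generate the Weyl
   group W). *)
Inductive is_root : Lam -> Prop :=
  | root_simple (i : nat) : (i < 7)%N -> is_root (alpha i)
  | root_refl (i : nat) (x : Lam) : (i < 7)%N -> is_root x -> is_root (refl i x).

Definition is_pos_root (x : Lam) : Prop := is_root x /\ forall j : 'I_7, 0 <= coord x j.

Definition f_alpha (i : nat) : V :=
  match i with
  | 0 => mkV 1 0 0
  | 1 => mkV 0 3 0
  | 2 => mkV 3 0 0
  | 3 => mkV 1 1 1
  | 4 => mkV 0 0 3
  | 5 => mkV 0 0 1
  | _ => mkV 0 3 3
  end%N.

(* Action of Z on the elementary abelian 2-group V. *)
Definition Vzmul (n : int) (v : V) : V := if odd `|n|%N then v else V0.

Definition f (x : Lam) : V :=
  foldr (fun j acc => Vadd (Vzmul (coord x j) (f_alpha j)) acc) V0 (iota 0 7).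

Definition lam0 : Lam := mk7 (fun _ => 0).

(* Main.v *)
Require Import Defs.
From mathcomp Require Import all_boot all_order all_algebra.
Local Open Scope ring_scope.

Definition build (jp : nat * seq nat) : Lam :=
  foldl (fun x i => refl i x) (alpha jp.1) jp.2.

Lemma foldl_root p x : is_root x -> all (fun i => i < 7)%N p ->
  is_root (foldl (fun x i => refl i x) x p).
Proof.
elim: p x => [|i p IH] x Hx //= /andP [Hi Hp].
by apply: IH => //; apply: root_refl.
Qed.

Definition der : seq (nat * seq nat) := [:: (0, [:: ]); (1, [:: ]); (2, [:: ]); (3, [:: ]); (4, [:: ]); (5, [:: ]); (6, [:: ]); (0, [:: 0]); (0, [:: 2]); (1, [:: 1]); (1, [:: 3]); (2, [:: 2]); (2, [:: 3]); (3, [:: 3]); (3, [:: 4]); (4, [:: 4]); (4, [:: 5]); (5, [:: 5]); (5, [:: 6]); (6, [:: 6]); (0, [:: 0; 2]); (0, [:: 2; 3]); (1, [:: 1; 3]); (1, [:: 3; 2]); (1, [:: 3; 4]); (2, [:: 2; 3]); (2, [:: 3; 4]); (3, [:: 3; 4]); (3, [:: 4; 5]); (4, [:: 4; 5]); (4, [:: 5; 6]); (5, [:: 5; 6]); (0, [:: 0; 2; 3]); (0, [:: 2; 3; 1]); (0, [:: 2; 3; 4]); (1, [:: 1; 3; 2]); (1, [:: 1; 3; 4]); (1, [:: 3; 2; 4]); (1, [:: 3; 4; 5]); (2, [:: 2; 3; 4]); (2, [:: 3; 4; 5]); (3, [:: 3; 4; 5]); (3, [:: 4; 5; 6]); (4,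 [:: 4; 5; 6]); (0, [:: 0; 2; 3; 1]); (0, [:: 0; 2; 3; 4]); (0, [:: 2; 3; 1; 4]); (0, [:: 2; 3; 4; 5]); (1, [:: 1; 3; 2; 4]); (1, [:: 1; 3; 4; 5]); (1, [:: 3; 2; 4; 3]); (1, [:: 3; 2; 4; 5]); (1, [:: 3; 4; 5; 6]); (2, [:: 2; 3; 4; 5]); (2, [:: 3; 4; 5; 6]); (3, [:: 3; 4; 5; 6]); (0, [:: 0; 2; 3; 1; 4]); (0, [:: 0; 2; 3; 4; 5]); (0, [:: 2; 3; 1; 4; 3]); (0, [:: 2; 3; 1; 4; 5]); (0, [:: 2; 3; 4; 5; 6]); (1, [:: 1; 3; 2; 4; 3]); (1, [:: 1; 3; 2; 4; 5]); (1, [:: 1; 3; 4; 5; 6]); (1, [:: 3; 2; 4; 3; 5]); (1, [:: 3; 2; 4; 5; 6]); (2, [:: 2; 3; 4; 5; 6]); (0, [:: 0; 2; 3; 1; 4; 3]); (0, [:: 0; 2; 3; 1; 4; 5]); (0, [:: 0; 2; 3; 4; 5; 6]); (0, [:: 2; 3; 1; 4; 3; 2]); (0, [:: 2; 3; 1; 4; 3; 5]); (0, [:: 2; 3; 1; 4; 5; 6]); (1, [:: 1; 3; 2; 4; 3; 5]); (1, [:: 1; 3; 2; 4; 5; 6]); (1, [:: 3; 2; 4; 3; 5; 4]); (1, [:: 3; 2; 4; 3; 5; 6]); (0, [:: 0; 2; 3; 1; 4; 3; 2]); (0, [:: 0; 2; 3; 1; 4; 3; 5]); (0, [:: 0; 2;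 3; 1; 4; 5; 6]); (0, [:: 2; 3; 1; 4; 3; 2; 5]); (0, [:: 2; 3; 1; 4; 3; 5; 4]); (0, [:: 2; 3; 1; 4; 3; 5; 6]); (1, [:: 1; 3; 2; 4; 3; 5; 4]); (1, [:: 1; 3; 2; 4; 3; 5; 6]); (1, [:: 3; 2; 4; 3; 5; 4; 6]); (0, [:: 0; 2; 3; 1; 4; 3; 2; 5]); (0, [:: 0; 2; 3; 1; 4; 3; 5; 4]); (0, [:: 0; 2; 3; 1; 4; 3; 5; 6]); (0, [:: 2; 3; 1; 4; 3; 2; 5; 4]); (0, [:: 2; 3; 1; 4; 3; 2; 5; 6]); (0, [:: 2; 3; 1; 4; 3; 5; 4; 6]); (1, [:: 1; 3; 2; 4; 3; 5; 4; 6]); (1, [:: 3; 2; 4; 3; 5; 4; 6; 5]); (0, [:: 0; 2; 3; 1; 4; 3; 2; 5; 4]); (0, [:: 0; 2; 3; 1; 4; 3; 2; 5; 6]); (0, [:: 0; 2; 3; 1; 4; 3; 5; 4; 6]); (0, [:: 2; 3; 1; 4; 3; 2; 5; 4; 3]); (0, [:: 2; 3; 1; 4; 3; 2; 5; 4; 6]); (0, [:: 2; 3; 1; 4; 3; 5; 4; 6; 5]); (1, [:: 1; 3; 2; 4; 3; 5; 4; 6; 5]); (0, [:: 0; 2; 3; 1; 4; 3; 2; 5; 4; 3]); (0, [:: 0; 2; 3; 1; 4; 3; 2; 5; 4; 6]); (0, [:: 0; 2; 3; 1; 4; 3; 5; 4; 6; 5]); (0, [:: 2; 3; 1; 4; 3;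 2; 5; 4; 3; 1]); (0, [:: 2; 3; 1; 4; 3; 2; 5; 4; 3; 6]); (0, [:: 2; 3; 1; 4; 3; 2; 5; 4; 6; 5]); (0, [:: 0; 2; 3; 1; 4; 3; 2; 5; 4; 3; 1]); (0, [:: 0; 2; 3; 1; 4; 3; 2; 5; 4; 3; 6]); (0, [:: 0; 2; 3; 1; 4; 3; 2; 5; 4; 6; 5]); (0, [:: 2; 3; 1; 4; 3; 2; 5; 4; 3; 1; 6]); (0, [:: 2; 3; 1; 4; 3; 2; 5; 4; 3; 6; 5]); (0, [:: 0; 2; 3; 1; 4; 3; 2; 5; 4; 3; 1; 6]); (0, [:: 0; 2; 3; 1; 4; 3; 2; 5; 4; 3; 6; 5]); (0, [:: 2; 3; 1; 4; 3; 2; 5; 4; 3; 1; 6; 5]); (0, [:: 2; 3; 1; 4; 3; 2; 5; 4; 3; 6; 5; 4]); (0, [:: 0; 2; 3; 1; 4; 3; 2; 5; 4; 3; 1; 6; 5]); (0, [:: 0; 2; 3; 1; 4; 3; 2; 5; 4; 3; 6; 5; 4]); (0, [:: 2; 3; 1; 4; 3; 2; 5; 4; 3; 1; 6; 5; 4]); (0, [:: 0; 2; 3; 1; 4; 3; 2; 5; 4; 3; 1; 6; 5; 4]); (0, [:: 2; 3; 1; 4; 3; 2; 5; 4; 3; 1; 6; 5; 4; 3]); (0, [:: 0; 2; 3; 1; 4; 3; 2; 5; 4; 3; 1; 6; 5; 4; 3]); (0, [:: 2; 3; 1; 4; 3; 2; 5; 4; 3; 1; 6; 5; 4; 3; 2]);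 (0, [:: 0; 2; 3; 1; 4; 3; 2; 5; 4; 3; 1; 6; 5; 4; 3; 2]); (0, [:: 2; 3; 1; 4; 3; 2; 5; 4; 3; 1; 6; 5; 4; 3; 2; 0]); (0, [:: 0; 2; 3; 1; 4; 3; 2; 5; 4; 3; 1; 6; 5; 4; 3; 2; 0])]%N.

Lemma der_ok : all (fun jp => (jp.1 < 7)%N && all (fun i => i < 7)%N jp.2) der.
Proof. vm_compute. reflexivity. Qed.

Definition R : seq Lam := Eval vm_compute in map build der.

Lemma R_def : R = map build der.
Proof. vm_compute. reflexivity. Qed.

Lemma clos_root x : x \in R -> is_root x.
Proof.
rewrite R_def => /mapP [jp Hjp ->].
move/allP: der_ok => /(_ jp Hjp) /andP [H1 H2].
exact: foldl_root (root_simple H1) H2.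
Qed.

Lemma R_closed : all (fun x => all (fun i => refl i x \in R) (iota 0 7)) R.
Proof. vm_compute. reflexivity. Qed.

Lemma R_alpha : all (fun i => alpha i \in R) (iota 0 7).
Proof. vm_compute. reflexivity. Qed.

Lemma root_R x : is_root x -> x \in R.
Proof.
elim=> [i Hi|i y Hi _ Hy].
  by move/allP: R_alpha; apply; rewrite mem_iota.
by move/allP: R_closed => /(_ y Hy)/allP; apply; rewrite mem_iota.
Qed.

Definition P : seq Lam := lam0 :: [seq x <- R | all (fun j => 0 <= Defs.coord x j) (iota 0 7)].

Lemma S_P x : (is_pos_root x \/ x = lam0) -> x \in P.
Proof.
case=> [[Hr Hp]|->]; last by rewrite inE eqxx.
rewrite inE mem_filter root_R // andbT orbC; apply/orP; left.
apply/allP=> j; rewrite mem_iota /= add0n => Hj.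
exact: (Hp (Ordinal Hj)).
Qed.

Lemma P_inj : all (fun x => all (fun y => (f x == f y) ==> (x == y)) P) P.
Proof. vm_compute. reflexivity. Qed.

Lemma P_surj : all (fun a => all (fun b => all (fun c =>
   has (fun x => f x == mkV a b c) P) (iota 0 4)) (iota 0 4)) (iota 0 4).
Proof. vm_compute. reflexivity. Qed.

Lemma mkF_ord (a : F) : mkF a = a.
Proof. by apply: val_inj => /=; rewrite modn_small. Qed.

Lemma P_S x : x \in P -> is_pos_root x \/ x = lam0.
Proof.
rewrite inE => /orP [/eqP -> |]; [by right|].
rewrite mem_filter => /andP [Ha Hx]; left; split; first exact: clos_root Hx.
move=> j; move/allP: Ha; apply; rewrite mem_iota /=; exact: ltn_ord.
Qed.

Theorem mainTheorem5 :
  let S := fun x : Lam => is_pos_root x \/ x = lam0 in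
  (forall x y : Lam, S x -> S y -> f x = f y -> x = y) /\
  (forall v : V, exists x : Lam, S x /\ f x = v).
Proof.
move=> S; split.
  move=> x y /S_P Hx /S_P Hy Hf.
  move/allP: P_inj => /(_ x Hx)/allP/(_ y Hy).
  by rewrite Hf eqxx => /eqP.
move=> [[a b] c].
have Hi (t : F) : (nat_of_ord t \in iota 0 4) by rewrite mem_iota ltn_ord.
move/allP: P_surj => /(_ a (Hi a))/allP/(_ b (Hi b))/allP/(_ c (Hi c)).
move=> /hasP [x Hx /eqP Hf]; exists x; split; first exact: P_S.
by rewrite Hf /mkV !mkF_ord.
Qed.
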